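(* Let $\alpha>0$, $A>0$ and $a\ge1$. Then for all $\lambda>0$, \[ \#\{k\ge1:\lambda_k(R^A_a,\alpha)\le\lambda\}\le\frac{\lambda A}{\pi^2}+\frac{(\lambda A)^{1/2}}{\pi}\Big(a+\frac1a\Big)+1. \]
   Context: For a bounded open set $\Omega\subset\mathbb{R}^2$ with Lipschitz boundary and $\alpha>0$, $\lambda_1(\Omega,\alpha)\le\lambda_2(\Omega,\alpha)\le\cdots$ denote the eigenvalues, counted with multiplicity, of the Robin Laplacian $-\Delta u=\lambda u$, $\partial_\nu u+\alpha u=0$ on $\partial\Omega$ (defined via the form $\int_\Omega\nabla u\cdot\overline{\nabla v}+\alpha\int_{\partial\Omega}u\overline v$ on $H^1(\Omega)$). $R^A_a$ is a rectangle with side lengths $A^{1/2}a$ and $A^{1/2}/a$. *)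

(* Defs.v *)
From Stdlib Require Import Reals Lra List.
From Coquelicot Require Import Coquelicot.
Open Scope R_scope.

Definition dx (u : R -> R -> R) (x y : R) : R := Derive (fun t => u t y) x.
Definition dy (u : R -> R -> R) (x y : R) : R := Derive (fun t => u x t) y.

(* C^1 functions on R^2 (their restrictions to a rectangle form a core of
   the Robin form domain H^1). *)
Definition C1R2 (u : R -> R -> R) : Prop :=
  (forall x y, ex_derive (fun t => u t y) x) /\
  (forall x y, ex_derive (fun t => u x t) y) /\
  (forall p : R * R, continuous (fun q : R * R => u (fst q) (snd q)) p) /\
  (forall p : R * R, continuous (fun q : R * R => dx u (fst q) (snd q)) p) /\
  (forall p : R * R, continuous (fun q : R * R => dy u (fst q) (snd q)) p).

Definition rect_int (L1 L2 : R) (f : R -> R -> R) : R :=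
  RInt (fun x => RInt (fun y => f x y) 0 L2) 0 L1.

Definition bdry_int (L1 L2 : R) (f : R -> R -> R) : R :=
  RInt (fun x => f x 0 + f x L2) 0 L1 + RInt (fun y => f 0 y + f L1 y) 0 L2.

Definition robin_form (alpha L1 L2 : R) (u : R -> R -> R) : R :=
  rect_int L1 L2 (fun x y => (dx u x y)^2 + (dy u x y)^2)
  + alpha * bdry_int L1 L2 (fun x y => (u x y)^2).

Definition l2sq (L1 L2 : R) (u : R -> R -> R) : R :=
  rect_int L1 L2 (fun x y => (u x y)^2).

Definition rayleigh (alpha L1 L2 : R) (u : R -> R -> R) : R :=
  robin_form alpha L1 L2 u / l2sq L1 L2 u.

Fixpoint fsum (k : nat) (g : nat -> R) : R :=
  match k with O => 0 | S k' => fsum k' g + g k' end.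

Definition lincomb (k : nat) (fs : nat -> R -> R -> R) (c : nat -> R) : R -> R -> R :=
  fun x y => fsum k (fun i => c i * fs i x y).

Definition lin_indep (L1 L2 : R) (k : nat) (fs : nat -> R -> R -> R) : Prop :=
  forall c : nat -> R,
    (forall x y, 0 <= x <= L1 -> 0 <= y <= L2 -> lincomb k fs c x y = 0) ->
    forall i, (i < k)%nat -> c i = 0.

Definition span_sup (alpha L1 L2 : R) (k : nat) (fs : nat -> R -> R -> R) : Rbar :=
  Lub_Rbar (fun r => exists c : nat -> R,
                (exists i, (i < k)%nat /\ c i <> 0) /\
                r = rayleigh alpha L1 L2 (lincomb k fs c)).

(* k-th Robin eigenvalue (counted with multiplicity) of [0,L1]x[0,L2] by the
   Courant-Fischer min-max principle over k-dimensional subspaces of the form core. *)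
Definition robin_ev (alpha L1 L2 : R) (k : nat) : Rbar :=
  Glb_Rbar (fun r => exists fs : nat -> R -> R -> R,
                (forall i, (i < k)%nat -> C1R2 (fs i)) /\
                lin_indep L1 L2 k fs /\
                span_sup alpha L1 L2 k fs = Finite r).

Definition side1 (A a : R) : R := sqrt A * a.
Definition side2 (A a : R) : R := sqrt A / a.

(* Main.v *)
Require Import Defs.
From Stdlib Require Import Reals Lra Lia List Classical ZArith.
From Coquelicot Require Import Coquelicot.
Open Scope R_scope.

Lemma cont_mul (f g : R -> R) x : continuous f x -> continuous g x -> continuous (fun y => f y * g y) x.
Proof. intros. apply (continuous_mult f g); auto. Qed.
Lemma cont_pow2 (f : R -> R) x : continuous f x -> continuous (fun y => f y ^ 2) x.
Proof. intros H. apply (continuous_ext (fun y => f y * f y)). intros; simpl; ring. apply cont_mul; auto. Qed.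
Lemma cont_plus (f g : R -> R) x : continuous f x -> continuous g x -> continuous (fun y => f y + g y) x.
Proof. intros. apply (continuous_plus f g); auto. Qed.
Lemma cont_minus (f g : R -> R) x : continuous f x -> continuous g x -> continuous (fun y => f y - g y) x.
Proof. intros. apply (continuous_minus f g); auto. Qed.
Lemma cont_opp (f : R -> R) x : continuous f x -> continuous (fun y => - f y) x.
Proof. intros. apply (continuous_opp f); auto. Qed.
Lemma cont_const (c : R) x : continuous (fun _ : R => c) x.
Proof. apply continuous_const. Qed.
Lemma cont_id x : continuous (fun y : R => y) x.
Proof. apply continuous_id. Qed.

Lemma exRI (f : R -> R) a b : (forall z, Rmin a b <= z <= Rmax a b -> continuous f z) -> ex_RInt f a b.
Proof. intros; apply (ex_RInt_continuous (V:=R_CompleteNormedModule)); auto. Qed.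

Lemma RI_add (f g : R -> R) a b : ex_RInt f a b -> ex_RInt g a b ->
  RInt (fun x => f x + g x) a b = RInt f a b + RInt g a b.
Proof. intros. apply (RInt_plus f g); auto. Qed.
Lemma RI_sub (f g : R -> R) a b : ex_RInt f a b -> ex_RInt g a b ->
  RInt (fun x => f x - g x) a b = RInt f a b - RInt g a b.
Proof. intros. apply (RInt_minus f g); auto. Qed.
Lemma RI_scal (f : R -> R) c a b : ex_RInt f a b ->
  RInt (fun x => c * f x) a b = c * RInt f a b.
Proof. intros. apply (RInt_scal f a b c); auto. Qed.
Lemma RI_cst c a b : RInt (fun _ => c) a b = (b - a) * c.
Proof. rewrite RInt_const. reflexivity. Qed.
Lemma RI_mono (f g : R -> R) a b : a <= b -> ex_RInt f a b -> ex_RInt g a b ->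
  (forall x, a <= x <= b -> f x <= g x) -> RInt f a b <= RInt g a b.
Proof. intros. apply RInt_le; auto. intros; apply H2; lra. Qed.
Lemma RI_ext (f g : R -> R) a b : a <= b -> (forall x, a <= x <= b -> f x = g x) -> RInt f a b = RInt g a b.
Proof. intros. apply RInt_ext. intros x Hx. rewrite Rmin_left in Hx by lra. rewrite Rmax_right in Hx by lra. apply H0; lra. Qed.
Lemma RI_nonneg (f : R -> R) a b : a <= b -> ex_RInt f a b -> (forall x, a <= x <= b -> 0 <= f x) -> 0 <= RInt f a b.
Proof. intros. rewrite <- (Rmult_0_r (b - a)), <- RI_cst. apply RI_mono; auto. apply ex_RInt_const. Qed.
Lemma dcont (f : R -> R) x d : is_derive f x d -> continuous f x.
Proof. intros H. apply (ex_derive_continuous (K:=R_AbsRing) (V:=R_NormedModule)). exists d; exact H. Qed.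
Lemma der_mul (f g : R -> R) x df dg : is_derive f x df -> is_derive g x dg ->
  is_derive (fun y => f y * g y) x (df * g x + f x * dg).
Proof. intros. apply (is_derive_mult f g); auto. intros; apply Rmult_comm. Qed.
Lemma der_sq (f : R -> R) x df : is_derive f x df -> is_derive (fun y => f y ^ 2) x (2 * f x * df).
Proof. intros H. apply (is_derive_ext (fun y => f y * f y)). intros; simpl; ring.
  replace (2 * f x * df) with (df * f x + f x * df) by ring. apply der_mul; auto. Qed.
Lemma der_eq (f : R -> R) (x d d' : R) : is_derive f x d -> d = d' -> is_derive f x d'.
Proof. intros; subst; auto. Qed.

Ltac cont := repeat match goal with
  | H : continuous ?f ?z |- continuous ?f ?z => exact H
  | |- continuous (fun y => ?a + ?b) _ => apply (cont_plus (fun y => a) (fun y => b))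
  | |- continuous (fun y => ?a - ?b) _ => apply (cont_minus (fun y => a) (fun y => b))
  | |- continuous (fun y => ?a * ?b) _ => apply (cont_mul (fun y => a) (fun y => b))
  | |- continuous (fun y => - ?a) _ => apply (cont_opp (fun y => a))
  | |- continuous (fun y => ?a ^ 2) _ => apply (cont_pow2 (fun y => a))
  | |- continuous (fun y => ?f y) _ => (is_var f; assumption)
  | |- continuous (fun y => y) _ => apply cont_id
  | |- continuous (fun y => _) _ => apply cont_const
  | |- continuous ?f _ => (is_var f; assumption)
  | H : forall x, continuous ?f x |- continuous (fun y => ?f y) _ => apply H
  | H : forall x, continuous ?f x |- continuous ?f _ => apply H
  end.
Ltac rfix := match goal with |- @eq _ ?a ?b => change (@eq R a b) end.

Lemma phi_deriv w c x : cos (w*(x-c)) <> 0 -> is_derive (fun x => - w * sin (w*(x-c)) / cos (w*(x-c))) x (- w^2 - (- w * sin (w*(x-c)) / cos (w*(x-c)))^2).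
Proof.
intros. auto_derive. auto.
assert (E := sin2_cos2 (w*(x-c))). unfold Rsqr in E. unfold Rminus in *. field_simplify; auto.
all: try (rewrite <- E; field; auto).
Qed.

Lemma wirt (s t w : R) (f f' : R -> R) : s < t -> 0 < w -> w * (t - s) < PI ->
  (forall x, is_derive f x (f' x)) -> (forall x, continuous f' x) -> RInt f s t = 0 ->
  w^2 * RInt (fun x => f x ^ 2) s t <= RInt (fun x => f' x ^ 2) s t.
Proof.
intros Hst Hw Hpi Hd Hc H0.
assert (Cf : forall x, continuous f x).
{ intros x. apply (dcont _ _ _ (Hd x)). }
set (F := (fun x => RInt f s x) : R -> R).
assert (DF : forall x, is_derive F x (f x)).
{ intros x. apply is_derive_RInt with s. 2: apply Cf.
  exists (mkposreal 1 Rlt_0_1). intros y _. apply (RInt_correct (V:=R_CompleteNormedModule)).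
  apply exRI. intros; apply Cf. }
assert (CF : forall x, continuous F x).
{ intros x. apply (dcont _ _ _ (DF x)). }
assert (Fs : F s = 0). { unfold F. exact (RInt_point (V:=R_CompleteNormedModule) s f). }
assert (Ft : F t = 0). { unfold F. apply H0. }
set (c := (s + t) / 2).
set (phi := fun x => - w * sin (w*(x-c)) / cos (w*(x-c))).
assert (Hcos : forall x, s <= x <= t -> 0 < cos (w*(x-c))).
{ intros x Hx. apply cos_gt_0.
  - assert (w * (x - c) >= - (w * ((t - s)/2))). { unfold c. apply Rle_ge. 
      replace (- (w * ((t - s) / 2))) with (w * (s - (s+t)/2)) by field. apply Rmult_le_compat_l; lra. }
    lra.
  - assert (w * (x - c) <= w * ((t - s)/2)). { unfold c. 
      replace (w * ((t - s) / 2)) with (w * (t - (s+t)/2)) by field. apply Rmult_le_compat_l; lra. }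
    lra. }
assert (Dphi : forall x, s <= x <= t -> is_derive phi x (- w^2 - phi x ^2)).
{ intros x Hx. apply phi_deriv. specialize (Hcos x Hx). lra. }
assert (Cphi : forall x, s <= x <= t -> continuous phi x).
{ intros x Hx. apply (dcont _ _ _ (Dphi x Hx)). }
clearbody F phi.
set (G' := fun x => (- w^2 - phi x ^2) * F x ^ 2 + phi x * (2 * F x * f x)).
assert (IG : RInt G' s t = 0).
{ assert (Hi : is_RInt G' s t (minus ((fun x => phi x * F x ^ 2) t) ((fun x => phi x * F x ^ 2) s))).
  { apply (is_RInt_derive (V:=R_CompleteNormedModule) (fun x => phi x * F x ^ 2) G').
    - intros x Hx. rewrite Rmin_left in Hx by lra. rewrite Rmax_right in Hx by lra.
      eapply der_eq. apply der_mul. apply Dphi; auto. apply der_sq. apply DF.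
      cbv beta. unfold G'. ring.
    - intros x Hx. rewrite Rmin_left in Hx by lra. rewrite Rmax_right in Hx by lra.
      unfold G'. specialize (Cphi x Hx). specialize (CF x). specialize (Cf x). cont. }
  rewrite (is_RInt_unique (V:=R_CompleteNormedModule) _ _ _ _ Hi). cbv beta. rewrite Fs, Ft. unfold minus, plus, opp; simpl. ring. }
assert (EX : forall g : R -> R, (forall z, s <= z <= t -> continuous g z) -> ex_RInt (V:=R_CompleteNormedModule) g s t).
{ intros g Hg. apply exRI. intros z Hz. rewrite Rmin_left in Hz by lra. rewrite Rmax_right in Hz by lra. auto. }
assert (IH : RInt (fun x => f x ^ 2 + F x * f' x) s t = 0).
{ assert (Hi : is_RInt (V:=R_CompleteNormedModule) (fun x => f x ^ 2 + F x * f' x) s t (minus ((fun x => F x * f x) t) ((fun x => F x * f x) s))).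
  { apply (is_RInt_derive (V:=R_CompleteNormedModule) (fun x => F x * f x)).
    - intros x Hx. eapply der_eq. apply der_mul. apply DF. apply Hd. ring.
    - intros x Hx. pose proof (CF x). pose proof (Cf x). pose proof (Hc x). cont. }
  rewrite (is_RInt_unique (V:=R_CompleteNormedModule) _ _ _ _ Hi). cbv beta. rewrite Fs, Ft. unfold minus, plus, opp; simpl. ring. }
assert (E1 : 0 <= RInt (fun x => f x ^ 2) s t - w^2 * RInt (fun x => F x ^ 2) s t).
{ replace (RInt (fun x => f x ^ 2) s t - w^2 * RInt (fun x => F x ^ 2) s t)
    with (RInt (fun x => (f x ^ 2 - w^2 * F x ^ 2) - G' x) s t).
  - apply RI_nonneg. lra.
    + apply EX. intros z Hz. pose proof (Cphi z Hz). pose proof (CF z). pose proof (Cf z). unfold G'. cont.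
    + intros x Hx. replace (f x ^ 2 - w ^ 2 * F x ^ 2 - G' x) with ((f x - phi x * F x)^2) by (unfold G'; ring).
      apply pow2_ge_0.
  - rewrite RI_sub, RI_sub, RI_scal, IG. rfix. ring.
    all: apply EX; intros z Hz; pose proof (Cphi z Hz); pose proof (CF z); pose proof (Cf z); unfold G'; cont. }
assert (E2 : RInt (fun x => f x ^ 2) s t + RInt (fun x => F x * f' x) s t = 0).
{ rewrite <- IH. rewrite RI_add. auto.
  all: apply EX; intros z Hz; pose proof (Hc z); pose proof (CF z); pose proof (Cf z); cont. }
assert (E3 : RInt (fun x => -2 * (F x * f' x)) s t <= RInt (fun x => w^2 * F x ^ 2 + / w^2 * f' x ^ 2) s t).
{ apply RI_mono. lra.
  1,2: apply EX; intros z Hz; pose proof (Hc z); pose proof (CF z); pose proof (Cf z); cont.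
  intros x Hx. replace (w^2 * F x ^ 2 + / w^2 * f' x ^ 2) with ((w * F x + f' x / w)^2 - 2 * (F x * f' x)) by (field; lra).
  assert (0 <= (w * F x + f' x / w)^2) by apply pow2_ge_0. lra. }
rewrite RI_scal, RI_add, RI_scal, RI_scal in E3.
all: try (apply EX; intros z Hz; pose proof (Hc z); pose proof (CF z); pose proof (Cf z); cont).
set (If2 := RInt (fun x => f x ^ 2) s t) in *.
set (IF2 := RInt (fun x => F x ^ 2) s t) in *.
set (Ip := RInt (fun x => f' x ^ 2) s t) in *.
set (IFp := RInt (fun x => F x * f' x) s t) in *.
assert (Hk : w^2 * / w^2 = 1) by (field; lra).
assert (2 * If2 <= If2 + / w^2 * Ip) by nra.
assert (Q1 : If2 <= / w^2 * Ip) by lra.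
assert (Q2 : 0 < w^2) by nra.
apply Rmult_le_compat_l with (r := w^2) in Q1; [|lra].
rewrite <- Rmult_assoc, Hk, Rmult_1_l in Q1. exact Q1.
Qed.

Lemma fsum_le n (a b : nat -> R) : (forall j, (j < n)%nat -> a j <= b j) -> fsum n a <= fsum n b.
Proof. induction n; simpl; intros H. lra. assert (a n <= b n) by (apply H; lia).
  assert (fsum n a <= fsum n b) by (apply IHn; intros; apply H; lia). lra. Qed.

Lemma fsum_ext n (a b : nat -> R) : (forall j, (j < n)%nat -> a j = b j) -> fsum n a = fsum n b.
Proof. induction n; simpl; intros H. lra. rewrite H by lia. rewrite IHn; [reflexivity|]. intros; apply H; lia. Qed.

Lemma fsum_S n g : fsum (S n) g = fsum n g + g n.
Proof. reflexivity. Qed.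

Lemma split_int (g : R -> R) (h : R) n : 0 < h -> (forall z, continuous g z) ->
  RInt g 0 (INR n * h) = fsum n (fun j => RInt g (INR j * h) (INR (S j) * h)).
Proof.
intros Hh Hg. induction n.
- simpl. rewrite Rmult_0_l. exact (RInt_point (V:=R_CompleteNormedModule) 0 g).
- rewrite fsum_S. rewrite <- IHn.
  rewrite <- (RInt_Chasles (V:=R_CompleteNormedModule) g 0 (INR n * h) (INR (S n) * h)). reflexivity.
  all: apply exRI; intros; apply Hg.
Qed.

Lemma wirt_pw (p : nat) (h w : R) (f f' : R -> R) : 0 < h -> 0 < w -> w * h < PI ->
  (forall x, is_derive f x (f' x)) -> (forall x, continuous f' x) ->
  (forall i, (i < p)%nat -> RInt f (INR i * h) (INR (S i) * h) = 0) ->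
  w^2 * RInt (fun x => f x ^ 2) 0 (INR p * h) <= RInt (fun x => f' x ^ 2) 0 (INR p * h).
Proof.
intros Hh Hw Hpi Hd Hc H0.
assert (Cf : forall x, continuous f x) by (intros x; apply (dcont _ _ _ (Hd x))).
rewrite !split_int; auto.
2,3: intros z; cont.
assert (E : forall n (a : nat -> R), w^2 * fsum n a = fsum n (fun j => w^2 * a j)).
{ induction n; simpl; intros; [ring|]. rewrite <- IHn. ring. }
rewrite E. apply fsum_le. intros j Hj.
apply wirt; auto.
- rewrite S_INR. nra.
- rewrite S_INR. replace ((INR j + 1) * h - INR j * h) with h by ring. auto.
Qed.

Definition cont2 (G : R -> R -> R) := forall x y, continuity_2d_pt G x y.

Lemma c2_cont (G : R -> R -> R) x y : cont2 G -> continuous (fun z : R * R => G (fst z) (snd z)) (x, y).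
Proof. intros H. apply (proj1 (continuity_2d_pt_filterlim G x y)). apply H. Qed.

Lemma c2_sy (G : R -> R -> R) x y : cont2 G -> continuous (fun t => G x t) y.
Proof. intros H.
  apply (continuous_comp_2 (fun _ : R => x) (fun t : R => t) G y).
  apply continuous_const. apply continuous_id. apply c2_cont; auto. Qed.
Lemma c2_sx (G : R -> R -> R) x y : cont2 G -> continuous (fun t => G t y) x.
Proof. intros H.
  apply (continuous_comp_2 (fun t : R => t) (fun _ : R => y) G x).
  apply continuous_id. apply continuous_const. apply c2_cont; auto. Qed.

Lemma c2_exRI (G : R -> R -> R) x a b : cont2 G -> ex_RInt (fun t => G x t) a b.
Proof. intros H. apply exRI. intros; apply c2_sy; auto. Qed.

Lemma PC (G : R -> R -> R) a b x0 : cont2 G -> a <= b -> continuous (fun x => RInt (fun y => G x y) a b) x0.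
Proof.
intros HG Hab. apply (proj2 (filterlim_locally (F:=locally x0) _ _)). intros eps.
assert (He : 0 < eps / (b - a + 1)). { apply Rdiv_lt_0_compat. apply cond_pos. lra. }
destruct (uniform_continuity_2d G (x0 - 1) (x0 + 1) a b (fun x y _ _ => HG x y) (mkposreal _ He)) as [d Hd].
assert (Hd' : 0 < Rmin d 1). { apply Rmin_pos. apply cond_pos. lra. }
exists (mkposreal _ Hd'). intros x Hx. change (Rabs (x - x0) < Rmin d 1) in Hx.
change (Rabs (RInt (fun y => G x y) a b - RInt (fun y => G x0 y) a b) < eps).
assert (Hx1 : Rabs (x - x0) < d) by (eapply Rlt_le_trans; [exact Hx| apply Rmin_l]).
assert (Hx2 : Rabs (x - x0) < 1) by (eapply Rlt_le_trans; [exact Hx| apply Rmin_r]).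
rewrite <- RI_sub by (apply c2_exRI; auto).
eapply Rle_lt_trans. apply abs_RInt_le_const with (M := eps / (b - a + 1)). auto.
apply (ex_RInt_minus (V:=R_NormedModule) (fun y => G x y) (fun y => G x0 y)); apply c2_exRI; auto.
intros t Ht. left. pose proof (proj1 (Rabs_lt_between' _ _ _) Hx2). apply Hd.
  all: try first [ lra | (rewrite Rminus_diag, Rabs_R0; apply cond_pos) | exact Hx1 ].
pose proof (cond_pos eps).
  apply Rle_lt_trans with ((b - a + 1) * (eps / (b - a + 1)) - eps / (b - a + 1)). simpl. nra.
  replace ((b - a + 1) * (eps / (b - a + 1))) with (pos eps) by (field; lra). lra.
Qed.

Lemma PD (u : R -> R -> R) a b x : (forall x y, ex_derive (fun t => u t y) x) -> cont2 u -> cont2 (dx u) ->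
  is_derive (fun x => RInt (fun y => u x y) a b) x (RInt (fun y => dx u x y) a b).
Proof.
intros Hd Hu Hdx.
apply (is_derive_RInt_param u a b x).
- exists (mkposreal 1 Rlt_0_1). intros; apply Hd.
- intros t _. apply Hdx.
- exists (mkposreal 1 Rlt_0_1). intros; apply c2_exRI; auto.
Qed.

Lemma c2_plus (f g : R -> R -> R) : cont2 f -> cont2 g -> cont2 (fun x y => f x y + g x y).
Proof. intros Hf Hg x y. apply continuity_2d_pt_plus; auto. Qed.
Lemma c2_minus (f g : R -> R -> R) : cont2 f -> cont2 g -> cont2 (fun x y => f x y - g x y).
Proof. intros Hf Hg x y. apply continuity_2d_pt_minus; auto. Qed.
Lemma c2_mult (f g : R -> R -> R) : cont2 f -> cont2 g -> cont2 (fun x y => f x y * g x y).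
Proof. intros Hf Hg x y. apply continuity_2d_pt_mult; auto. Qed.
Lemma c2_const c : cont2 (fun _ _ => c).
Proof. intros x y. apply continuity_2d_pt_const. Qed.
Lemma c2_pow2 (f : R -> R -> R) : cont2 f -> cont2 (fun x y => f x y ^ 2).
Proof. intros Hf. intros x y. apply (continuity_2d_pt_ext (fun x y => f x y * f x y)). intros; simpl; ring.
  apply c2_mult; auto. Qed.
Ltac c2t := repeat match goal with
  | |- cont2 (fun x y => ?a + ?b) => apply (c2_plus (fun x y => a) (fun x y => b))
  | |- cont2 (fun x y => ?a - ?b) => apply (c2_minus (fun x y => a) (fun x y => b))
  | |- cont2 (fun x y => ?a * ?b) => apply (c2_mult (fun x y => a) (fun x y => b))
  | |- cont2 (fun x y => ?a ^ 2) => apply (c2_pow2 (fun x y => a))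
  | |- cont2 (fun x y => ?f x y) => (first [assumption | change (cont2 f); assumption])
  | |- cont2 (fun x y => _) => apply c2_const
  end.

Lemma var_id (g : R -> R) a b : a < b -> (forall z, continuous g z) ->
  RInt (fun y => (g y - RInt g a b / (b - a)) ^ 2) a b = RInt (fun y => g y ^ 2) a b - (RInt g a b)^2 / (b - a).
Proof.
intros Hab Hg. set (M := RInt g a b). set (c := M / (b - a)).
assert (EX : forall f : R -> R, (forall z, continuous f z) -> ex_RInt (V:=R_CompleteNormedModule) f a b).
{ intros f Hf. apply exRI. intros; auto. }
rewrite (RI_ext _ (fun y => (g y ^ 2 + (-2 * c) * g y) + c ^ 2)) by (lra || (intros; ring)).
rewrite RI_add, RI_add, RI_scal, RI_cst.
2-6: try apply EX; intros; cont.
fold M. unfold c. rfix. field. lra.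
Qed.

Lemma RInt_fsum n (g : nat -> R -> R) (c : nat -> R) a b : (forall j, (j < n)%nat -> ex_RInt (g j) a b) ->
  RInt (fun x => fsum n (fun j => c j * g j x)) a b = fsum n (fun j => c j * RInt (g j) a b).
Proof.
induction n; intros H.
- simpl. rewrite RI_cst. ring.
- rewrite fsum_S. rewrite <- IHn by (intros; apply H; lia).
  simpl fsum. rewrite RI_add. rewrite RI_scal. reflexivity.
  + apply H; lia.
  + clear IHn. induction n. simpl. apply ex_RInt_const.
    simpl fsum. apply (ex_RInt_plus (V:=R_NormedModule) (fun x => fsum n (fun j => c j * g j x)) (fun x => c n * g n x)).
    apply IHn. intros; apply H; lia. apply (ex_RInt_scal (V:=R_NormedModule) (g n)). apply H; lia.
  + apply (ex_RInt_scal (V:=R_NormedModule) (g n)). apply H; lia.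
Qed.

Definition C1' (u : R -> R -> R) := (forall x y, ex_derive (fun t => u t y) x) /\ (forall x y, ex_derive (fun t => u x t) y) /\ cont2 u /\ cont2 (dx u) /\ cont2 (dy u).

Lemma strip (u : R -> R -> R) y0 y1 p h1 w : C1' u -> y0 < y1 -> 0 < h1 -> 0 < w -> w * h1 < PI -> w * (y1 - y0) < PI ->
 (forall i, (i < p)%nat -> RInt (fun x => RInt (fun y => u x y) y0 y1) (INR i * h1) (INR (S i) * h1) = 0) ->
 w^2 * RInt (fun x => RInt (fun y => u x y ^ 2) y0 y1) 0 (INR p * h1)
   <= RInt (fun x => RInt (fun y => dx u x y ^ 2 + dy u x y ^ 2) y0 y1) 0 (INR p * h1).
Proof.
intros [Dx [Dy [Cu [Cdx Cdy]]]] Hy Hh1 Hw Hp1 Hp2 Hc.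
set (h := y1 - y0).
set (m := fun x => RInt (fun y => u x y) y0 y1).
set (m' := fun x => RInt (fun y => dx u x y) y0 y1).
set (S := fun x => RInt (fun y => u x y ^ 2) y0 y1).
assert (C2 : cont2 (fun x y => u x y ^ 2)) by c2t.
assert (C3 : cont2 (fun x y => dx u x y ^ 2 + dy u x y ^ 2)) by c2t.
assert (PT : forall x, (/ h) * m' x ^ 2 + w^2 * S x - (w^2 / h) * m x ^ 2 <= RInt (fun y => dx u x y ^ 2 + dy u x y ^ 2) y0 y1).
{ intros x.
  rewrite (RI_add (fun y => dx u x y ^2) (fun y => dy u x y ^2)) by (apply (c2_exRI (fun x y => _ x y ^2)); c2t).
  assert (A : 0 <= RInt (fun y => dx u x y ^ 2) y0 y1 - m' x ^ 2 / h).
  { unfold m', h. rewrite <- (var_id (fun y => dx u x y)) by (auto || (intros; apply c2_sy; auto)).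
    apply RI_nonneg. lra. apply exRI; intros. pose proof (c2_sy _ x z Cdx). cont.
    intros; apply pow2_ge_0. }
  assert (B : w^2 * RInt (fun y => (u x y - m x / h) ^ 2) y0 y1 <= RInt (fun y => dy u x y ^ 2) y0 y1).
  { apply (wirt y0 y1 w (fun y => u x y - m x / h) (fun y => dy u x y)); auto.
    - intros y. eapply der_eq. apply (is_derive_minus (fun y => u x y) (fun _ => m x / h)).
      apply Derive_correct. apply Dy. apply is_derive_const. unfold dy. unfold minus, plus, opp, zero; simpl. ring.
    - intros y. apply c2_sy; auto.
    - rewrite RI_sub, RI_cst. unfold m, h. rfix. replace (RInt (u x) y0 y1) with (RInt (fun y => u x y) y0 y1) by reflexivity. field. lra.
      apply c2_exRI; auto. apply ex_RInt_const. }
  unfold m, h in B. rewrite var_id in B by (auto || (intros; apply c2_sy; auto)).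
  fold (m x) h in B. unfold S. 
  assert (E : w ^ 2 / h * m x ^ 2 = w^2 * (m x ^2 / h)) by (field; unfold h; lra). rewrite E.
  assert (E' : / h * m' x ^ 2 = m' x ^2 / h) by (field; unfold h; lra). rewrite E'. lra. }
assert (Cm : forall x, continuous m x) by (intros; apply (PC u); auto; lra).
assert (Cm' : forall x, continuous m' x) by (intros; apply (PC (dx u)); auto; lra).
assert (CS : forall x, continuous S x) by (intros; apply (PC (fun x y => u x y ^ 2)); auto; lra).
assert (CT : forall x, continuous (fun x => RInt (fun y => dx u x y ^ 2 + dy u x y ^ 2) y0 y1) x)
  by (intros; apply (PC (fun x y => dx u x y ^ 2 + dy u x y ^ 2)); auto; lra).
assert (Dm : forall x, is_derive m x (m' x)) by (intros; apply PD; auto).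
assert (WP := wirt_pw p h1 w m m' Hh1 Hw Hp1 Dm Cm' Hc).
assert (Hp0 : 0 <= INR p * h1) by (apply Rmult_le_pos; [apply pos_INR | lra]).
assert (EX : forall f : R -> R, (forall z, continuous f z) -> ex_RInt (V:=R_CompleteNormedModule) f 0 (INR p * h1)).
{ intros f Hf. apply exRI. intros; auto. }
apply Rle_trans with (RInt (fun x => / h * m' x ^ 2 + w^2 * S x - (w^2 / h) * m x ^ 2) 0 (INR p * h1)).
- rewrite (RI_sub (fun x => / h * m' x ^ 2 + w^2 * S x) (fun x => (w^2 / h) * m x ^ 2)).
  rewrite (RI_add (fun x => / h * m' x ^ 2) (fun x => w^2 * S x)).
  rewrite (RI_scal (fun x => m' x ^ 2)), (RI_scal S), (RI_scal (fun x => m x ^ 2)).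
  all: try (apply EX; intros; cont).
  fold S.
  assert (Hh : 0 < / h) by (apply Rinv_0_lt_compat; unfold h; lra).
  apply Rmult_le_compat_l with (r := / h) in WP; [|lra].
  replace (w ^ 2 / h * RInt (fun x : R => m x ^ 2) 0 (INR p * h1)) with (/ h * (w ^ 2 * RInt (fun x : R => m x ^ 2) 0 (INR p * h1))) by (unfold Rdiv; ring).
  lra.
- apply RI_mono; auto.
  + apply EX; intros; cont.
Qed.

Lemma fsum_scal n (a : nat -> R) c : c * fsum n a = fsum n (fun j => c * a j).
Proof. induction n; simpl; [ring|]. rewrite <- IHn. ring. Qed.

Lemma split2 (G : R -> R -> R) (L1 h2 : R) q : 0 < h2 -> cont2 G ->
  RInt (fun x => RInt (fun y => G x y) 0 (INR q * h2)) 0 L1 =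
  fsum q (fun j => RInt (fun x => RInt (fun y => G x y) (INR j * h2) (INR (S j) * h2)) 0 L1).
Proof.
intros Hh HG.
rewrite (RInt_ext (V:=R_CompleteNormedModule) _ (fun x => fsum q (fun j => 1 * (fun j x => RInt (fun y => G x y) (INR j * h2) (INR (S j) * h2)) j x))).
- rewrite RInt_fsum. apply fsum_ext. intros; cbv beta; apply Rmult_1_l.
  intros j _. apply exRI. intros z _. apply (PC (fun x y => G x y)). auto.
  apply Rmult_le_compat_r. lra. rewrite S_INR. lra.
- intros x _. rewrite split_int; auto. apply fsum_ext. intros; cbv beta; symmetry; apply Rmult_1_l.
  intros; apply c2_sy; auto.
Qed.

Lemma grad_ineq (u : R -> R -> R) L1 L2 p q w : C1' u -> (0 < p)%nat -> (0 < q)%nat -> 0 < L1 -> 0 < L2 -> 0 < w ->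
  w * (L1 / INR p) < PI -> w * (L2 / INR q) < PI ->
  (forall i j, (i < p)%nat -> (j < q)%nat ->
     RInt (fun x => RInt (fun y => u x y) (INR j * (L2 / INR q)) (INR (S j) * (L2 / INR q))) (INR i * (L1 / INR p)) (INR (S i) * (L1 / INR p)) = 0) ->
  w^2 * l2sq L1 L2 u <= rect_int L1 L2 (fun x y => dx u x y ^ 2 + dy u x y ^ 2).
Proof.
intros HC Hp Hq HL1 HL2 Hw Hp1 Hp2 Hc.
pose proof HC as [Dx [Dy [Cu [Cdx Cdy]]]].
set (h1 := L1 / INR p) in *. set (h2 := L2 / INR q) in *.
assert (Pp : 0 < INR p) by (apply lt_0_INR; lia).
assert (Pq : 0 < INR q) by (apply lt_0_INR; lia).
assert (H1p : 0 < h1) by (unfold h1; apply Rdiv_lt_0_compat; lra).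
assert (H2p : 0 < h2) by (unfold h2; apply Rdiv_lt_0_compat; lra).
assert (E1 : L1 = INR p * h1) by (unfold h1; field; lra).
assert (E2 : L2 = INR q * h2) by (unfold h2; field; lra).
unfold l2sq, rect_int. rewrite E2.
rewrite (split2 (fun x y => u x y ^ 2)), (split2 (fun x y => dx u x y ^ 2 + dy u x y ^ 2)); auto.
2,3: c2t.
rewrite fsum_scal. apply fsum_le. intros j Hj.
rewrite E1. apply strip; auto.
- apply Rmult_lt_compat_r. lra. rewrite S_INR. lra.
- rewrite S_INR. replace ((INR j + 1) * h2 - INR j * h2) with h2 by ring. auto.
Qed.

Lemma C1R2_C1' u : C1R2 u -> C1' u.
Proof.
intros [A [B [C [D E]]]]. repeat split; auto.
all: intros x y; apply (proj2 (continuity_2d_pt_filterlim _ x y)).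
apply (C (x, y)). apply (D (x, y)). apply (E (x, y)).
Qed.

Lemma c2_ext (f g : R -> R -> R) : (forall x y, f x y = g x y) -> cont2 f -> cont2 g.
Proof. intros H Hf x y. apply (continuity_2d_pt_ext f g); auto. Qed.

Lemma C1'_lin (f g : R -> R -> R) r : C1' f -> C1' g -> C1' (fun x y => f x y + r * g x y).
Proof.
intros [Af [Bf [Cf [Df Ef]]]] [Ag [Bg [Cg [Dg Eg]]]].
assert (DX : forall x y, dx (fun x y => f x y + r * g x y) x y = dx f x y + r * dx g x y).
{ intros x y. unfold dx. rewrite Derive_plus; auto. rewrite Derive_scal. reflexivity.
  apply ex_derive_scal; auto. }
assert (DY : forall x y, dy (fun x y => f x y + r * g x y) x y = dy f x y + r * dy g x y).
{ intros x y. unfold dy. rewrite Derive_plus; auto. rewrite Derive_scal. reflexivity.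
  apply ex_derive_scal; auto. }
repeat split.
- intros x y. apply (ex_derive_plus (fun t => f t y) (fun t => r * g t y)); auto. apply (ex_derive_scal (fun t => g t y)); auto.
- intros x y. apply (ex_derive_plus (fun t => f x t) (fun t => r * g x t)); auto. apply (ex_derive_scal (fun t => g x t)); auto.
- c2t.
- apply (c2_ext (fun x y => dx f x y + r * dx g x y)). intros; rewrite DX; auto. c2t.
- apply (c2_ext (fun x y => dy f x y + r * dy g x y)). intros; rewrite DY; auto. c2t.
Qed.

Lemma C1'_zero : C1' (fun _ _ => 0).
Proof.
repeat split.
- intros; apply ex_derive_const.
- intros; apply ex_derive_const.
- apply c2_const.
- apply (c2_ext (fun _ _ => 0)). intros; unfold dx; rewrite Derive_const; auto. apply c2_const.
- apply (c2_ext (fun _ _ => 0)). intros; unfold dy; rewrite Derive_const; auto. apply c2_const.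
Qed.

Lemma C1'_lincomb k fs c : (forall i, (i < k)%nat -> C1' (fs i)) -> C1' (lincomb k fs c).
Proof.
induction k; intros H.
- unfold lincomb; simpl. apply C1'_zero.
- unfold lincomb; simpl. apply (C1'_lin (lincomb k fs c) (fs k) (c k)).
  apply IHk; intros; apply H; lia. apply H; lia.
Qed.

Lemma fsum_plus n (f g : nat -> R) : fsum n (fun i => f i + g i) = fsum n f + fsum n g.
Proof. induction n; simpl; [ring|]. rewrite IHn; ring. Qed.
Lemma fsum_zero n (f : nat -> R) : (forall i, (i < n)%nat -> f i = 0) -> fsum n f = 0.
Proof. induction n; simpl; intros H; [ring|]. rewrite IHn by (intros; apply H; lia). rewrite H by lia. ring. Qed.

Definition sig_ (i0 i : nat) : nat := if Nat.ltb i i0 then i else S i.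

Lemma fsum_del k (F : nat -> R) i0 : (i0 <= k)%nat ->
  fsum (S k) F = fsum k (fun i => F (sig_ i0 i)) + F i0.
Proof.
induction k; intros H.
- assert (i0 = 0%nat) by lia. subst. simpl. ring.
- destruct (Nat.eq_dec i0 (S k)) as [->|Hne].
  + rewrite fsum_S. f_equal. apply fsum_ext. intros j Hj. unfold sig_.
    destruct (Nat.ltb_spec j (S k)); [reflexivity | lia].
  + rewrite fsum_S, IHk by lia. rewrite (fsum_S k).
    assert (Ek : sig_ i0 k = S k) by (unfold sig_; destruct (Nat.ltb_spec k i0); [lia|reflexivity]). rewrite Ek. ring.
Qed.

Lemma lin_alg n : forall k (a : nat -> nat -> R), (n < k)%nat ->
  exists c : nat -> R, (exists i, (i < k)%nat /\ c i <> 0) /\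
    forall j, (j < n)%nat -> fsum k (fun i => c i * a j i) = 0.
Proof.
induction n; intros k a Hk.
- exists (fun _ => 1). split. exists 0%nat. split; [lia|lra]. intros; lia.
- destruct (classic (exists i0, (i0 < k)%nat /\ a n i0 <> 0)) as [[i0 [Hi0 Hr]]|Hno].
  + destruct k as [|k]; [lia|].
    set (b := fun j i => a j (sig_ i0 i) - (a n (sig_ i0 i) / a n i0) * a j i0).
    destruct (IHn k b) as [d [[i1 [Hi1 Hd]] Hs]]; [lia|].
    set (c0 := - fsum k (fun i => d i * a n (sig_ i0 i)) / a n i0).
    set (c := fun l => if Nat.eqb l i0 then c0 else d (if Nat.ltb l i0 then l else pred l)).
    assert (Cs : forall i, c (sig_ i0 i) = d i).
    { intros i. unfold c, sig_. destruct (Nat.ltb_spec i i0).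
      - destruct (Nat.eqb_spec i i0); [lia|]. destruct (Nat.ltb_spec i i0); [reflexivity|lia].
      - destruct (Nat.eqb_spec (S i) i0); [lia|]. destruct (Nat.ltb_spec (S i) i0); [lia|reflexivity]. }
    assert (C0 : c i0 = c0). { unfold c. rewrite Nat.eqb_refl. reflexivity. }
    exists c. split.
    * exists (sig_ i0 i1). split. unfold sig_; destruct (Nat.ltb_spec i1 i0); lia. rewrite Cs; auto.
    * intros j Hj. rewrite (fsum_del k _ i0) by lia.
      rewrite (fsum_ext k _ (fun i => d i * a j (sig_ i0 i))) by (intros; rewrite Cs; reflexivity).
      rewrite C0. unfold c0.
      destruct (Nat.eq_dec j n) as [->|Hjn].
      -- field. auto.
      -- assert (Hb := Hs j ltac:(lia)). unfold b in Hb.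
         rewrite (fsum_ext k _ (fun i => d i * a j (sig_ i0 i) + (- a j i0 / a n i0) * (d i * a n (sig_ i0 i)))) in Hb
           by (intros; field; auto).
         rewrite fsum_plus, <- fsum_scal in Hb.
         rewrite <- Hb. field. auto.
  + destruct (IHn k a) as [d [Hd Hs]]; [lia|].
    exists d. split; auto. intros j Hj.
    destruct (Nat.eq_dec j n) as [->|Hjn].
    * apply fsum_zero. intros i Hi. destruct (Req_dec (a n i) 0) as [E|E].
      rewrite E; ring. exfalso; apply Hno; eauto.
    * apply Hs; lia.
Qed.

Lemma pos1 (f : R -> R) a b x0 : a < b -> (forall z, continuous f z) -> (forall x, a <= x <= b -> 0 <= f x) ->
  a <= x0 <= b -> 0 < f x0 -> 0 < RInt f a b.
Proof.
intros Hab Hc Hnn Hx0 Hp.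
assert (He : 0 < f x0 / 2) by lra.
destruct (proj1 (filterlim_locally (F:=locally x0) f (f x0)) (Hc x0) (mkposreal _ He)) as [d Hd].
pose proof (cond_pos d) as Hdp.
set (s := Rmax a (x0 - d/2)). set (t := Rmin b (x0 + d/2)).
assert (Hs1 : a <= s) by apply Rmax_l. assert (Ht1 : t <= b) by apply Rmin_l.
assert (Hs2 : s <= x0) by (apply Rmax_lub; lra).
assert (Ht2 : x0 <= t) by (apply Rmin_glb; lra).
assert (Hst : s < t).
{ unfold s, t. apply Rmax_lub_lt; apply Rmin_glb_lt; lra. }
assert (Hs3 : x0 - d/2 <= s) by apply Rmax_r. assert (Ht3 : t <= x0 + d/2) by apply Rmin_r.
assert (EX : forall u v, ex_RInt (V:=R_CompleteNormedModule) f u v) by (intros; apply exRI; auto).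
rewrite <- (RInt_Chasles (V:=R_CompleteNormedModule) f a s b) by auto.
rewrite <- (RInt_Chasles (V:=R_CompleteNormedModule) f s t b) by auto.
assert (0 <= RInt f a s) by (apply RI_nonneg; auto; intros; apply Hnn; lra).
assert (0 <= RInt f t b) by (apply RI_nonneg; auto; intros; apply Hnn; lra).
assert ((t - s) * (f x0 / 2) <= RInt f s t).
{ rewrite <- RI_cst. apply RI_mono; auto. lra. apply ex_RInt_const.
  intros x Hx. assert (Hb : ball x0 d x).
  { change (Rabs (x - x0) < d). apply Rabs_def1; lra. }
  specialize (Hd x Hb). change (Rabs (f x - f x0) < f x0 / 2) in Hd.
  apply Rabs_def2 in Hd. lra. }
assert (0 < (t - s) * (f x0 / 2)) by (apply Rmult_lt_0_compat; lra).
change (0 < RInt f a s + (RInt f s t + RInt f t b)). lra.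
Qed.

Lemma l2sq_pos (u : R -> R -> R) L1 L2 x0 y0 : cont2 u -> 0 < L1 -> 0 < L2 ->
  0 <= x0 <= L1 -> 0 <= y0 <= L2 -> u x0 y0 <> 0 -> 0 < l2sq L1 L2 u.
Proof.
intros Cu H1 H2 Hx Hy Hn. unfold l2sq, rect_int.
assert (C2 : cont2 (fun x y => u x y ^ 2)) by c2t.
apply pos1 with x0; auto.
- intros z. apply (PC (fun x y => u x y ^ 2)); auto; lra.
- intros x Hx'. apply RI_nonneg. lra. apply (c2_exRI (fun x y => u x y ^ 2)); auto. intros; apply pow2_ge_0.
- apply pos1 with y0; auto.
  + intros z. apply (c2_sy (fun x y => u x y ^ 2)); auto.
  + intros; apply pow2_ge_0.
  + assert (0 < u x0 y0 ^ 2). { apply pow2_gt_0. auto. } lra.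
Qed.

Lemma rayleigh_ge (u : R -> R -> R) alpha L1 L2 p q w x0 y0 : C1' u -> 0 < alpha -> (0 < p)%nat -> (0 < q)%nat -> 0 < L1 -> 0 < L2 -> 0 < w ->
  w * (L1 / INR p) < PI -> w * (L2 / INR q) < PI ->
  (forall i j, (i < p)%nat -> (j < q)%nat ->
     RInt (fun x => RInt (fun y => u x y) (INR j * (L2 / INR q)) (INR (S j) * (L2 / INR q))) (INR i * (L1 / INR p)) (INR (S i) * (L1 / INR p)) = 0) ->
  0 <= x0 <= L1 -> 0 <= y0 <= L2 -> u x0 y0 <> 0 ->
  w^2 <= rayleigh alpha L1 L2 u.
Proof.
intros HC Ha Hp Hq HL1 HL2 Hw Hp1 Hp2 Hc Hx Hy Hn.
pose proof HC as [Dx [Dy [Cu [Cdx Cdy]]]].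
assert (P := l2sq_pos u L1 L2 x0 y0 Cu HL1 HL2 Hx Hy Hn).
assert (G := grad_ineq u L1 L2 p q w HC Hp Hq HL1 HL2 Hw Hp1 Hp2 Hc).
assert (B : 0 <= bdry_int L1 L2 (fun x y => u x y ^ 2)).
{ unfold bdry_int. apply Rplus_le_le_0_compat; apply RI_nonneg; try lra.
  1,3: apply exRI; intros z _; pose proof (c2_sx u z 0 Cu); pose proof (c2_sx u z L2 Cu);
       pose proof (c2_sy u 0 z Cu); pose proof (c2_sy u L1 z Cu); cont.
  all: intros; pose proof (pow2_ge_0 (u x 0)); pose proof (pow2_ge_0 (u x L2));
       pose proof (pow2_ge_0 (u 0 x)); pose proof (pow2_ge_0 (u L1 x)); lra. }
unfold rayleigh, robin_form.
set (Pq := l2sq L1 L2 u) in *.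
set (Gr := rect_int L1 L2 (fun x y => dx u x y ^ 2 + dy u x y ^ 2)) in *.
set (Bd := bdry_int L1 L2 (fun x y => u x y ^ 2)) in *.
apply Rmult_le_reg_r with Pq; auto.
unfold Rdiv. rewrite Rmult_assoc, Rinv_l, Rmult_1_r by lra.
assert (0 <= alpha * Bd) by (apply Rmult_le_pos; lra). lra.
Qed.

Lemma ev_lower alpha L1 L2 p q w k : 0 < alpha -> (0 < p)%nat -> (0 < q)%nat -> 0 < L1 -> 0 < L2 -> 0 < w ->
  w * (L1 / INR p) < PI -> w * (L2 / INR q) < PI -> (p * q < k)%nat ->
  Rbar_le (Finite (w ^ 2)) (robin_ev alpha L1 L2 k).
Proof.
intros Ha Hp Hq HL1 HL2 Hw Hp1 Hp2 Hk.
unfold robin_ev. apply (proj2 (Glb_Rbar_correct _)).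
intros r [fs [Hfs [Hli Hsup]]]. simpl.
set (h1 := L1 / INR p) in *. set (h2 := L2 / INR q) in *.
assert (Pp : 0 < INR p) by (apply lt_0_INR; lia).
assert (Pq : 0 < INR q) by (apply lt_0_INR; lia).
assert (H1p : 0 < h1) by (unfold h1; apply Rdiv_lt_0_compat; lra).
assert (H2p : 0 < h2) by (unfold h2; apply Rdiv_lt_0_compat; lra).
assert (C1 : forall l, (l < k)%nat -> C1' (fs l)) by (intros; apply C1R2_C1'; auto).
set (ai := fun t l => RInt (fun x => RInt (fun y => fs l x y) (INR (t mod q) * h2) (INR (S (t mod q)) * h2))
                          (INR (t / q) * h1) (INR (S (t / q)) * h1)).
destruct (lin_alg (p * q) k ai Hk) as [c [[i1 [Hi1 Hc1]] Hc]].
set (u := lincomb k fs c).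
assert (Cu : C1' u) by (apply C1'_lincomb; auto).
assert (Lin : forall X0 X1 Y0 Y1, Y0 <= Y1 -> RInt (fun x => RInt (fun y => u x y) Y0 Y1) X0 X1 =
   fsum k (fun l => c l * RInt (fun x => RInt (fun y => fs l x y) Y0 Y1) X0 X1)).
{ intros X0 X1 Y0 Y1 HY.
  rewrite (RInt_ext (V:=R_CompleteNormedModule) _ (fun x => fsum k (fun l => c l * RInt (fun y => fs l x y) Y0 Y1))).
  - apply (RInt_fsum k (fun l x => RInt (fun y => fs l x y) Y0 Y1) c).
    intros j Hj. apply exRI. intros z _.
    apply (PC (fs j)); auto. apply C1; auto.
  - intros x _. unfold u, lincomb. apply (RInt_fsum k (fun l y => fs l x y) c).
    intros j Hj. apply (c2_exRI (fs j)). apply C1; auto. }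
assert (Cons : forall i j, (i < p)%nat -> (j < q)%nat ->
     RInt (fun x => RInt (fun y => u x y) (INR j * h2) (INR (S j) * h2)) (INR i * h1) (INR (S i) * h1) = 0).
{ intros i j Hi Hj. rewrite Lin by (apply Rmult_le_compat_r; [lra| rewrite S_INR; lra]).
  assert (Ht : (q * i + j < p * q)%nat) by nia.
  specialize (Hc _ Ht). unfold ai in Hc.
  rewrite <- (Nat.div_unique (q * i + j) q i j Hj eq_refl) in Hc.
  rewrite <- (Nat.mod_unique (q * i + j) q i j Hj eq_refl) in Hc. exact Hc. }
assert (NZ : exists x0 y0, 0 <= x0 <= L1 /\ 0 <= y0 <= L2 /\ u x0 y0 <> 0).
{ apply NNPP. intros Hno. apply Hc1. apply (Hli c); auto.
  intros x y Hx Hy. apply NNPP. intros Hne. apply Hno. exists x, y. auto. }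
destruct NZ as [x0 [y0 [Hx [Hy Hn]]]].
assert (R1 := rayleigh_ge u alpha L1 L2 p q w x0 y0 Cu Ha Hp Hq HL1 HL2 Hw Hp1 Hp2 Cons Hx Hy Hn).
assert (R2 : Rbar_le (rayleigh alpha L1 L2 u) (span_sup alpha L1 L2 k fs)).
{ unfold span_sup. apply (proj1 (Lub_Rbar_correct _)). exists c. split; eauto. }
rewrite Hsup in R2. simpl in R2. lra.
Qed.

Lemma nat_ceil x : 0 <= x -> exists n : nat, x < INR n /\ INR n <= x + 1.
Proof.
intros Hx. destruct (archimed x) as [A B].
assert (Hz : (0 < up x)%Z) by (apply lt_IZR; simpl; lra).
exists (Z.to_nat (up x)). rewrite INR_IZR_INZ, Z2Nat.id by lia. split; lra.
Qed.

Theorem lemma6p3 (alpha A a : R) :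
  0 < alpha -> 0 < A -> 1 <= a ->
  forall lam : R, 0 < lam ->
  forall ks : list nat,
    NoDup ks ->
    (forall k, In k ks ->
       (1 <= k)%nat /\ Rbar_le (robin_ev alpha (side1 A a) (side2 A a) k) (Finite lam)) ->
    INR (length ks) <= lam * A / PI ^ 2 + sqrt (lam * A) / PI * (a + 1 / a) + 1.
Proof.
intros Ha HA Ha1 lam Hl ks Hnd Hks.
set (L1 := side1 A a) in *. set (L2 := side2 A a) in *.
assert (HsA : 0 < sqrt A) by (apply sqrt_lt_R0; lra).
assert (Hsl : 0 < sqrt lam) by (apply sqrt_lt_R0; lra).
assert (HL1 : 0 < L1) by (unfold L1, side1; nra).
assert (HL2 : 0 < L2) by (unfold L2, side2; apply Rdiv_lt_0_compat; lra).
assert (HPI := PI_RGT_0).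
set (Rr := sqrt lam / PI).
assert (HRr : 0 < Rr) by (unfold Rr; apply Rdiv_lt_0_compat; lra).
destruct (nat_ceil (Rr * L1)) as [p [Hp1 Hp2]]; [nra|].
destruct (nat_ceil (Rr * L2)) as [q [Hq1 Hq2]]; [nra|].
assert (Pp : (0 < p)%nat). { destruct p; [simpl in Hp1; nra | lia]. }
assert (Pq : (0 < q)%nat). { destruct q; [simpl in Hq1; nra | lia]. }
assert (Ip : 0 < INR p) by (apply lt_0_INR; lia).
assert (Iq : 0 < INR q) by (apply lt_0_INR; lia).
assert (M1 : sqrt lam < PI * INR p / L1).
{ unfold Rr in Hp1. apply Rmult_lt_reg_r with (L1 / PI). apply Rdiv_lt_0_compat; lra.
  replace (PI * INR p / L1 * (L1 / PI)) with (INR p) by (field; lra).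
  replace (sqrt lam * (L1 / PI)) with (sqrt lam / PI * L1) by (field; lra). lra. }
assert (M2 : sqrt lam < PI * INR q / L2).
{ unfold Rr in Hq1. apply Rmult_lt_reg_r with (L2 / PI). apply Rdiv_lt_0_compat; lra.
  replace (PI * INR q / L2 * (L2 / PI)) with (INR q) by (field; lra).
  replace (sqrt lam * (L2 / PI)) with (sqrt lam / PI * L2) by (field; lra). lra. }
set (m := Rmin (PI * INR p / L1) (PI * INR q / L2)).
assert (Hm : sqrt lam < m) by (apply Rmin_glb_lt; auto).
set (w := (sqrt lam + m) / 2).
assert (Hw1 : sqrt lam < w) by (unfold w; lra).
assert (Hw2 : w < m) by (unfold w; lra).
assert (Hw : 0 < w) by lra.
assert (W1 : w * (L1 / INR p) < PI).
{ assert (w < PI * INR p / L1) by (eapply Rlt_le_trans; [exact Hw2| apply Rmin_l]).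
  apply Rmult_lt_reg_r with (INR p / L1). apply Rdiv_lt_0_compat; lra.
  replace (w * (L1 / INR p) * (INR p / L1)) with w by (field; lra).
  replace (PI * (INR p / L1)) with (PI * INR p / L1) by (field; lra). lra. }
assert (W2 : w * (L2 / INR q) < PI).
{ assert (w < PI * INR q / L2) by (eapply Rlt_le_trans; [exact Hw2| apply Rmin_r]).
  apply Rmult_lt_reg_r with (INR q / L2). apply Rdiv_lt_0_compat; lra.
  replace (w * (L2 / INR q) * (INR q / L2)) with w by (field; lra).
  replace (PI * (INR q / L2)) with (PI * INR q / L2) by (field; lra). lra. }
assert (Hlw : lam < w ^ 2).
{ rewrite <- (sqrt_sqrt lam) by lra. simpl. nra. }
assert (Bnd : forall k, In k ks -> (1 <= k <= p * q)%nat).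
{ intros k Hk. destruct (Hks k Hk) as [K1 K2]. split; auto.
  destruct (le_lt_dec k (p * q)) as [Le|Lt]; auto. exfalso.
  pose proof (ev_lower alpha L1 L2 p q w k Ha Pp Pq HL1 HL2 Hw W1 W2 Lt) as E.
  pose proof (Rbar_le_trans _ _ _ E K2) as F. simpl in F. lra. }
assert (Len : (length ks <= p * q)%nat).
{ rewrite <- (length_seq (p * q) 1). apply NoDup_incl_length; auto.
  intros k Hk. apply in_seq. specialize (Bnd k Hk). lia. }
apply le_INR in Len. rewrite mult_INR in Len.
assert (Prod : INR p * INR q <= (Rr * L1 + 1) * (Rr * L2 + 1)).
{ apply Rmult_le_compat; lra. }
assert (Eq : (Rr * L1 + 1) * (Rr * L2 + 1) = lam * A / PI ^ 2 + sqrt (lam * A) / PI * (a + 1 / a) + 1).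
{ unfold Rr, L1, L2, side1, side2. rewrite sqrt_mult by lra.
  assert (E1 : sqrt lam * sqrt lam = lam) by (apply sqrt_sqrt; lra).
  assert (E2 : sqrt A * sqrt A = A) by (apply sqrt_sqrt; lra).
  replace (lam * A) with (sqrt lam * sqrt lam * (sqrt A * sqrt A)) by (rewrite E1, E2; reflexivity). field. lra. }
lra.
Qed.
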